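(* In the standing setup below, if $y\in|\mathcal S|$ is an accumulation point of the sequence $\{X_{\mathcal A,w_i}\mid i\in\mathbb{N}\}$, then $y\in X(\mathcal S,w)$.
   Context: Notation: $\mathcal A\subset\mathbb{R}^d$ finite, affinely spanning $\mathbb{R}^d$; $\Delta^{\mathcal A}=\{z\in\mathbb{R}^{\mathcal A}_{\ge0}\mid\sum z_{\mathbf a}=1\}$ with homogeneous coordinates and $\ell_1$ metric $d$; $\Delta^{\mathcal F}$ the face where $z_{\mathbf a}=0$ for $\mathbf a\notin\mathcal F$. For $w\in\mathbb{R}^{\mathcal A}_>$ and $\mathcal F\subset\mathcal A$, $X_{\mathcal F,w}$ is the closure in $\Delta^{\mathcal F}$ of $\{[w_{\mathbf f}x^{\mathbf f}\mid\mathbf f\in\mathcal F]\mid x\in\mathbb{R}^d_>\}$, $x^{\mathbf a}=\prod_j\exp(\mathbf a_j\log x_j)$. A point $y$ is an accumulation point of $\{X_{\mathcal A,w_i}\}$ if for every $\epsilon>0$ and $N$ there are $i>N$ and $z\in X_{\mathcal A,w_i}$ with $d(y,z)<\epsilon$. For $\lambda\in\mathbb{R}^{\mathcal A}$, $\mathcal S_\lambda$ is the regular subdivision whose faces are the sets $\{\mathbf a\mid(\mathbf a,\lambda(\mathbf a))\in F\}$, $F$ an upper face (outward normal with positive last coordinate) of $\mathrm{conv}\{(\mathbf a,\lambda(\mathbf a))\}$. The secondary fan $\Sigma_{\mathcal A}$ consists of the closures of the sets $\{\lambda\mid\mathcal S_\lambda=\mathcal S\}$; $\mathcal S_\sigma$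 is the subdivision of the cone $\sigma$. $|\mathcal S|=\bigcup_{\mathcal F\text{ face of }\mathcal S}\Delta^{\mathcal F}$ and $X(\mathcal S,w)=\bigcup_{\mathcal F\text{ face of }\mathcal S}X_{\mathcal F,w}$. A sequence in a cone $\tau$ is $\sigma$-bounded if $\{\psi(v_i)\}$ is bounded for every linear $\psi$ vanishing on the face $\sigma$. Standing setup: $\{w_i\}\subset\mathbb{R}^{\mathcal A}_>$, $v_i=\mathrm{Log}(w_i)$; there is a cone $\tau\in\Sigma_{\mathcal A}$ containing all $v_i$ with only finitely many $v_i$ in any proper face of $\tau$; a face $\sigma$ of $\tau$ is the minimum face of boundedness (smallest face for which the sequence is bounded) of every subsequence of $\{v_i\}$; $v_i=u_i+\bar v_i$ with $u_i\in\sigma$, $\bar v_i\to v$; $w=\mathrm{Exp}(v)$; $\mathcal S=\mathcal S_\sigma$. *)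

(* Defs.v *)
From Stdlib Require Import Reals.
Open Scope R_scope.

(* Conventions: the point configuration A has n points indexed by a < n,
   point a has coordinates (pt a j), j < d.  Vectors of R^A are functions
   nat -> R of which only indices a < n matter.  Subsets F of A are
   boolean predicates on indices (only a < n matter). *)

Fixpoint fsum (n : nat) (f : nat -> R) : R :=
  match n with O => 0 | S k => fsum k f + f k end.

Definition distinct_points (n d : nat) (pt : nat -> nat -> R) : Prop :=
  forall a b, (a < n)%nat -> (b < n)%nat ->
    (forall j, (j < d)%nat -> pt a j = pt b j) -> a = b.

Definition affinely_spanning (n d : nat) (pt : nat -> nat -> R) : Prop :=
  forall x : nat -> R, exists c : nat -> R,
    fsum n c = 1 /\
    forall j, (j < d)%nat -> fsum n (fun a => c a * pt a j) = x j.

Definition dist1 (n : nat) (y z : nat -> R) : R :=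
  fsum n (fun a => Rabs (y a - z a)).

Definition in_simplex_face (n : nat) (F : nat -> bool) (z : nat -> R) : Prop :=
  (forall a, (a < n)%nat -> 0 <= z a) /\
  (forall a, (a < n)%nat -> F a = false -> z a = 0) /\
  fsum n z = 1.

Definition allA : nat -> bool := fun _ => true.

Definition monomial (d : nat) (pt : nat -> nat -> R) (x : nat -> R) (a : nat) : R :=
  exp (fsum d (fun j => pt a j * ln (x j))).

(* the point [w_f x^f | f in F] in homogeneous coordinates *)
Definition mono_point (n d : nat) (pt : nat -> nat -> R) (F : nat -> bool)
    (w x : nat -> R) : nat -> R :=
  let q := fun a => if F a then w a * monomial d pt x a else 0 in
  fun a => q a / fsum n q.

(* X_{F,w}: closure in Delta^F of the image of the positive torus *)
Definition Xset (n d : nat) (pt : nat -> nat -> R) (F : nat -> bool)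
    (w : nat -> R) (y : nat -> R) : Prop :=
  in_simplex_face n F y /\
  forall eps, 0 < eps -> exists x : nat -> R,
    (forall j, (j < d)%nat -> 0 < x j) /\
    dist1 n y (mono_point n d pt F w x) < eps.

(* F is a face of the regular subdivision S_lam: F = {a | (a, lam a) in G}
   for an upper face G of conv{(a, lam a)}, i.e. G maximizes the linear
   functional with normal (c, t), t > 0, over the lifted points. *)
Definition lin_lift (d : nat) (pt : nat -> nat -> R) (lam c : nat -> R) (t : R)
    (a : nat) : R :=
  fsum d (fun j => c j * pt a j) + t * lam a.

Definition subdiv_face (n d : nat) (pt : nat -> nat -> R) (lam : nat -> R)
    (F : nat -> bool) : Prop :=
  exists (c : nat -> R) (t : R), 0 < t /\
    forall a, (a < n)%nat ->
      (F a = true <->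
       forall b, (b < n)%nat -> lin_lift d pt lam c t b <= lin_lift d pt lam c t a).

Definition same_subdiv (n d : nat) (pt : nat -> nat -> R) (lam mu : nat -> R) : Prop :=
  forall F : nat -> bool, subdiv_face n d pt lam F <-> subdiv_face n d pt mu F.

Definition closure_RA (n : nat) (P : (nat -> R) -> Prop) (lam : nat -> R) : Prop :=
  forall eps, 0 < eps -> exists mu, P mu /\ dist1 n lam mu < eps.

(* the cone of the secondary fan associated with S_lam0:
   closure of {lam | S_lam = S_lam0} *)
Definition sec_cone (n d : nat) (pt : nat -> nat -> R) (lam0 : nat -> R) :
    (nat -> R) -> Prop :=
  closure_RA n (fun mu => same_subdiv n d pt mu lam0).

Definition same_set (P Q : (nat -> R) -> Prop) : Prop := forall lam, P lam <-> Q lam.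

Definition in_sec_fan (n d : nat) (pt : nat -> nat -> R) (tau : (nat -> R) -> Prop) : Prop :=
  exists lam0, same_set tau (sec_cone n d pt lam0).

Definition linf (n : nat) (p lam : nat -> R) : R := fsum n (fun a => p a * lam a).

Definition cone_face (n : nat) (tau sigma : (nat -> R) -> Prop) : Prop :=
  exists p : nat -> R,
    (forall lam, tau lam -> 0 <= linf n p lam) /\
    same_set sigma (fun lam => tau lam /\ linf n p lam = 0).

Definition sigma_bounded (n : nat) (sigma : (nat -> R) -> Prop) (v : nat -> nat -> R) : Prop :=
  forall p : nat -> R, (forall lam, sigma lam -> linf n p lam = 0) ->
    exists M, forall i, Rabs (linf n p (v i)) <= M.

Definition min_face_bounded (n : nat) (tau sigma : (nat -> R) -> Prop)
    (v : nat -> nat -> R) : Prop :=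
  cone_face n tau sigma /\ sigma_bounded n sigma v /\
  forall sigma', cone_face n tau sigma' -> sigma_bounded n sigma' v ->
    forall lam, sigma lam -> sigma' lam.

Definition LogV (w : nat -> R) : nat -> R := fun a => ln (w a).
Definition ExpV (v : nat -> R) : nat -> R := fun a => exp (v a).

Definition accum_point (n d : nat) (pt : nat -> nat -> R) (ws : nat -> nat -> R)
    (y : nat -> R) : Prop :=
  forall eps, 0 < eps -> forall N : nat, exists i z,
    (N < i)%nat /\ Xset n d pt allA (ws i) z /\ dist1 n y z < eps.

(* Main.v *)
Require Import Defs.
From Stdlib Require Import Reals Lra Lia.
Open Scope R_scope.

Lemma fsum_ext n f g : (forall a, (a < n)%nat -> f a = g a) -> fsum n f = fsum n g.
Proof. induction n; intros H; simpl; auto. rewrite IHn by (intros; apply H; lia). rewrite (H n) by lia. reflexivity. Qed.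

Lemma fsum_le n f g : (forall a, (a < n)%nat -> f a <= g a) -> fsum n f <= fsum n g.
Proof. induction n; intros H; simpl; [lra|]. pose proof (H n ltac:(lia)). pose proof (IHn (fun a Ha => H a ltac:(lia))). lra. Qed.

Lemma fsum_plus n f g : fsum n (fun a => f a + g a) = fsum n f + fsum n g.
Proof. induction n; simpl; [lra|]. rewrite IHn. ring. Qed.

Lemma fsum_mult n c f : fsum n (fun a => c * f a) = c * fsum n f.
Proof. induction n; simpl; [ring|]. rewrite IHn. ring. Qed.

Lemma fsum_zero n : fsum n (fun _ => 0) = 0.
Proof. induction n; simpl; [lra|]. rewrite IHn. ring. Qed.

Lemma fsum_abs n f : Rabs (fsum n f) <= fsum n (fun a => Rabs (f a)).
Proof. induction n; simpl. rewrite Rabs_R0; lra. eapply Rle_trans. apply Rabs_triang. lra. Qed.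

Lemma fsum_nonneg n f : (forall a, (a < n)%nat -> 0 <= f a) -> 0 <= fsum n f.
Proof. intros H. rewrite <- (fsum_zero n). apply fsum_le. auto. Qed.

Lemma fsum_pos n f : (0 < n)%nat -> (forall a, (a < n)%nat -> 0 < f a) -> 0 < fsum n f.
Proof. destruct n; [lia|]. intros _ H. simpl. pose proof (H n ltac:(lia)).
  assert (0 <= fsum n f) by (apply fsum_nonneg; intros; left; apply H; lia). lra. Qed.

Lemma term_le n f a : (a < n)%nat -> (forall b, (b < n)%nat -> 0 <= f b) -> f a <= fsum n f.
Proof. induction n; intros Ha H; [lia|]. simpl. destruct (Nat.eq_dec a n).
  - subst. assert (0 <= fsum n f) by (apply fsum_nonneg; intros; apply H; lia). lra.
  - assert (f a <= fsum n f) by (apply IHn; [lia| intros; apply H; lia]). pose proof (H n ltac:(lia)). lra. Qed.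

Lemma exists_true n (F : nat -> bool) y : fsum n y = 1 -> (forall a, (a < n)%nat -> F a = false -> y a = 0) ->
  exists a, (a < n)%nat /\ F a = true.
Proof. intros H1 H2. destruct (Classical_Prop.classic (exists a, (a < n)%nat /\ F a = true)) as [|Hn]; auto.
  exfalso. assert (fsum n y = fsum n (fun _ => 0)). { apply fsum_ext. intros a Ha. apply H2; auto.
  destruct (F a) eqn:E; auto. exfalso; apply Hn; eauto. } rewrite fsum_zero in H. lra. Qed.

Lemma dist_triang n y z w : dist1 n y w <= dist1 n y z + dist1 n z w.
Proof. unfold dist1. rewrite <- fsum_plus. apply fsum_le. intros.
  replace (y a - w a) with ((y a - z a) + (z a - w a)) by ring. apply Rabs_triang. Qed.

Lemma unif_cv n (g : nat -> nat -> R) v : (forall a, (a < n)%nat -> Un_cv (fun i => g i a) (v a)) ->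
  forall e, 0 < e -> exists N, forall i, (N <= i)%nat -> forall a, (a < n)%nat -> Rabs (g i a - v a) < e.
Proof. induction n; intros H e He. exists O; intros; lia.
  destruct (IHn (fun a Ha => H a ltac:(lia)) e He) as [N1 HN1].
  destruct (H n ltac:(lia) e He) as [N2 HN2]. exists (N1 + N2)%nat. intros i Hi a Ha.
  destruct (Nat.eq_dec a n). subst. unfold R_dist in HN2. apply HN2. lia. apply HN1; lia. Qed.

Lemma exp_ge1 s : 1 + s <= exp s.
Proof. destruct (Req_dec s 0). subst. rewrite exp_0. lra. left. apply exp_ineq1. auto. Qed.

Lemma exp_near s h : Rabs s <= h -> h <= 1/2 -> Rabs (exp s - 1) <= 2 * h.
Proof. intros H1 H2. assert (-h <= s <= h) by (unfold Rabs in H1; destruct (Rcase_abs s); lra).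
  apply Rabs_le. pose proof (exp_ge1 s). pose proof (exp_ge1 (-s)).
  assert (exp s * exp (-s) = 1) by (rewrite <- exp_plus; replace (s + - s) with 0 by ring; apply exp_0).
  pose proof (exp_pos s). pose proof (exp_pos (-s)).
  assert (exp s * (1 - s) <= 1) by nra. split; nra. Qed.

Lemma fsum_minus n f g : fsum n (fun a => f a - g a) = fsum n f - fsum n g.
Proof. induction n; simpl; [lra|]. rewrite IHn. ring. Qed.

Lemma key n (F : nat -> bool) (y q r P : nat -> R) K eta :
  0 < K -> 0 < eta -> eta <= 1/8 ->
  in_simplex_face n F y ->
  (forall a, (a < n)%nat -> 0 <= q a) -> fsum n q = 1 ->
  dist1 n y q < eta ->
  (forall a, (a < n)%nat -> F a = true -> Rabs (r a - 1) <= eta) ->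
  (forall a, (a < n)%nat -> P a = if F a then K * (q a * r a) else 0) ->
  dist1 n y (fun a => P a / fsum n P) <= 6 * eta.
Proof.
  intros HK He He8 [Hy0 [Hy1 Hy2]] Hq0 Hq1 Hd Hr HP.
  set (D := fsum n (fun a => if F a then q a * r a else 0)).
  assert (HPD : fsum n P = K * D).
  { unfold D. rewrite <- fsum_mult. apply fsum_ext. intros a Ha. rewrite HP by auto. destruct (F a); ring. }
  set (m := fsum n (fun a => if F a then q a else 0)).
  set (o := fsum n (fun a => if F a then 0 else q a)).
  assert (Hmo : m + o = 1). { unfold m, o. rewrite <- fsum_plus, <- Hq1. apply fsum_ext. intros; destruct (F a); ring. }
  assert (Ho : o <= dist1 n y q). { apply fsum_le. intros a Ha. destruct (F a) eqn:E. apply Rabs_pos.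
    rewrite (Hy1 a Ha E). rewrite Rabs_minus_sym, Rminus_0_r, Rabs_right; [lra| apply Rle_ge, Hq0; auto]. }
  assert (Hm0 : 0 <= m). { apply fsum_nonneg. intros; destruct (F a); auto; lra. }
  assert (HDm : Rabs (D - m) <= eta * m).
  { unfold D, m. rewrite <- fsum_mult.
    replace (fsum n (fun a => if F a then q a * r a else 0) - fsum n (fun a => if F a then q a else 0))
      with (fsum n (fun a => if F a then q a * (r a - 1) else 0)).
    2:{ rewrite <- fsum_minus. apply fsum_ext. intros; destruct (F a); ring. }
    eapply Rle_trans. apply fsum_abs. apply fsum_le. intros a Ha. destruct (F a) eqn:E.
    - rewrite Rabs_mult, (Rabs_right (q a)) by (apply Rle_ge, Hq0; auto).
      pose proof (Hr a Ha E). pose proof (Hq0 a Ha). nra.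
    - rewrite Rabs_R0. lra. }
  assert (HD1 : Rabs (D - 1) <= 2 * eta).
  { assert (0 <= o) by (unfold o; apply fsum_nonneg; intros; destruct (F a); auto; lra).
    apply Rabs_le. assert (-(eta*m) <= D - m <= eta*m) by (unfold Rabs in HDm; destruct Rcase_abs in HDm; lra).
    split; nra. }
  assert (HDp : 3/4 <= D) by (unfold Rabs in HD1; destruct Rcase_abs in HD1; lra).
  assert (Hpt : forall a, (a < n)%nat ->
     Rabs (y a - P a / fsum n P) <= 2 * Rabs (y a - q a) + 4 * eta * q a).
  { intros a Ha. rewrite HPD, HP by auto. pose proof (Hq0 a Ha). pose proof (Rabs_pos (y a - q a)).
    destruct (F a) eqn:E.
    - replace (y a - K * (q a * r a) / (K * D)) with ((y a - q a) + q a * (D - r a) / D) by (field; lra).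
      eapply Rle_trans. apply Rabs_triang.
      assert (Rabs (q a * (D - r a) / D) <= 4 * eta * q a).
      { pose proof (Hr a Ha E). apply Rabs_le.
        assert (-(3*eta) <= D - r a <= 3*eta) by (unfold Rabs in *; destruct Rcase_abs in HD1; destruct Rcase_abs in H1; lra).
        split.
        + apply (Rmult_le_reg_r D); [lra|]. replace (q a * (D - r a) / D * D) with (q a * (D - r a)) by (field; lra). assert (0 <= (D - r a + 3*eta) * q a) by (apply Rmult_le_pos; lra). assert (0 <= (3*eta - (D - r a)) * q a) by (apply Rmult_le_pos; lra). assert (0 <= q a * (4*D-3)*eta) by (apply Rmult_le_pos; [apply Rmult_le_pos|]; lra). nra.
        + apply (Rmult_le_reg_r D); [lra|]. replace (q a * (D - r a) / D * D) with (q a * (D - r a)) by (field; lra). assert (0 <= (D - r a + 3*eta) * q a) by (apply Rmult_le_pos; lra). assert (0 <= (3*eta - (D - r a)) * q a) by (apply Rmult_le_pos; lra). assert (0 <= q a * (4*D-3)*eta) by (apply Rmult_le_pos; [apply Rmult_le_pos|]; lra). nra. }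
      lra.
    - rewrite (Hy1 a Ha E). unfold Rdiv; rewrite Rmult_0_l, Rminus_0_r, Rabs_R0. pose proof (Rabs_pos (0 - q a)). nra. }
  unfold dist1. eapply Rle_trans. apply fsum_le. exact Hpt.
  rewrite fsum_plus, fsum_mult, fsum_mult. unfold dist1 in Hd. 
  replace (fsum n (fun a => eta * q a)) with (eta * fsum n q) by (rewrite fsum_mult; auto).
  rewrite Hq1. lra.
Qed.

Theorem mainTheorem11
  (n d : nat) (pt : nat -> nat -> R)
  (Hdist : distinct_points n d pt)
  (Haff : affinely_spanning n d pt)
  (ws : nat -> nat -> R)
  (Hpos : forall i a, (a < n)%nat -> 0 < ws i a)
  (tau : (nat -> R) -> Prop)
  (Htau : in_sec_fan n d pt tau)
  (Hin : forall i, tau (LogV (ws i)))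
  (Hproper : forall sigma', cone_face n tau sigma' -> ~ same_set sigma' tau ->
      exists N, forall i, (N <= i)%nat -> ~ sigma' (LogV (ws i)))
  (sigma : (nat -> R) -> Prop)
  (Hmin : forall phi : nat -> nat, (forall i, (phi i < phi (S i))%nat) ->
      min_face_bounded n tau sigma (fun i => LogV (ws (phi i))))
  (u vbar : nat -> nat -> R) (v : nat -> R)
  (Hdec : forall i a, (a < n)%nat -> LogV (ws i) a = u i a + vbar i a)
  (Hu : forall i, sigma (u i))
  (Hconv : forall a, (a < n)%nat -> Un_cv (fun i => vbar i a) (v a))
  (lamS : nat -> R)
  (HS : same_set sigma (sec_cone n d pt lamS))
  (y : nat -> R)
  (Hy : exists F, subdiv_face n d pt lamS F /\ in_simplex_face n F y)
  (Hacc : accum_point n d pt ws y) :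
  exists F, subdiv_face n d pt lamS F /\ Xset n d pt F (ExpV v) y.
Proof.
  destruct Hy as [F0 [HF0 HyF]]. exists F0. split; auto. split; auto.
  intros eps Heps.
  set (eta := Rmin (eps/7) (1/8)).
  assert (He0 : 0 < eta) by (unfold eta; apply Rmin_glb_lt; lra).
  assert (He8 : eta <= 1/8) by (unfold eta; apply Rmin_r).
  assert (He7 : eta <= eps/7) by (unfold eta; apply Rmin_l).
  set (h := eta / 4).
  destruct (unif_cv n vbar v Hconv h ltac:(unfold h; lra)) as [N HN].
  destruct (Hacc (eta/2) ltac:(lra) N) as [i [z [Hi [Hz Hyz]]]].
  destruct Hz as [_ Hz]. destruct (Hz (eta/2) ltac:(lra)) as [x [Hx Hzx]].
  pose proof (Hu i) as Hui. apply HS in Hui. destruct (Hui h ltac:(unfold h; lra)) as [mu [Hmu Hdmu]].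
  pose proof (proj2 (Hmu F0) HF0) as HF0mu.
  destruct HF0mu as [c [t [Ht Hc]]].
  pose proof HyF as [Hy0 [Hy1 Hy2]].
  destruct (exists_true n F0 y Hy2 Hy1) as [a0 [Ha0 Fa0]].
  set (M := lin_lift d pt mu c t a0).
  assert (HM : forall a, (a < n)%nat -> F0 a = true -> lin_lift d pt mu c t a = M).
  { intros a Ha Fa. pose proof (proj1 (Hc a Ha) Fa a0 Ha0). pose proof (proj1 (Hc a0 Ha0) Fa0 a Ha).
    unfold M; lra. }
  assert (Hn : (0 < n)%nat) by lia.
  exists (fun j => x j * exp (- c j / t)). split.
  { intros j Hj. apply Rmult_lt_0_compat. auto. apply exp_pos. }
  set (Q := fun a => ws i a * monomial d pt x a).
  set (Sq := fsum n Q).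
  assert (HQ : forall a, (a < n)%nat -> 0 < Q a).
  { intros a Ha. unfold Q. apply Rmult_lt_0_compat. auto. apply exp_pos. }
  assert (HSq : 0 < Sq) by (apply fsum_pos; auto).
  set (q := fun a => Q a / Sq).
  assert (Hqm : mono_point n d pt allA (ws i) x = q) by reflexivity.
  assert (Hyq : dist1 n y q < eta).
  { rewrite <- Hqm. eapply Rle_lt_trans. apply (dist_triang n y z). lra. }
  set (r := fun a => exp ((v a - vbar i a) + (mu a - u i a))).
  set (x' := fun j => x j * exp (- c j / t)).
  set (P := fun a => if F0 a then ExpV v a * monomial d pt x' a else 0).
  change (dist1 n y (fun a => P a / fsum n P) < eps).
  eapply Rle_lt_trans.
  2:{ assert (6 * eta < eps) by lra. exact H. }
  apply (key n F0 y q r P (exp (- M / t) * Sq) eta); auto.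
  - apply Rmult_lt_0_compat. apply exp_pos. auto.
  - intros a Ha. unfold q. left. apply Rdiv_lt_0_compat; auto.
  - unfold q. unfold Rdiv. rewrite (fsum_ext n _ (fun a => / Sq * Q a)) by (intros; ring).
    rewrite fsum_mult. fold Sq. field. lra.
  - intros a Ha Fa. unfold r. replace eta with (2 * (2 * h)) by (unfold h; lra).
    apply exp_near; [|unfold h; lra].
    assert (Rabs (vbar i a - v a) < h) by (apply HN; auto; lia).
    assert (Rabs (u i a - mu a) <= dist1 n (u i) mu).
    { apply (term_le n (fun a => Rabs (u i a - mu a))); auto. intros; apply Rabs_pos. }
    eapply Rle_trans. apply Rabs_triang. rewrite (Rabs_minus_sym (v a)), (Rabs_minus_sym (mu a)). lra.
  - intros a Ha. unfold P. destruct (F0 a) eqn:Fa; [|reflexivity].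
    pose proof (HM a Ha Fa) as HMa. unfold lin_lift in HMa.
    unfold q, Q, r, ExpV, monomial, x'.
    rewrite (fsum_ext d (fun j => pt a j * ln (x j * exp (- c j / t)))
                        (fun j => pt a j * ln (x j) + (- / t) * (c j * pt a j))).
    2:{ intros j Hj. rewrite ln_mult, ln_exp by (auto; apply exp_pos). field. lra. }
    rewrite fsum_plus, fsum_mult.
    replace (fsum d (fun j => c j * pt a j)) with (M - t * mu a) by lra.
    assert (Hw : ws i a = exp (u i a + vbar i a)).
    { rewrite <- Hdec by auto. unfold LogV. rewrite exp_ln; auto. }
    rewrite Hw.
    replace (exp (- M / t) * Sq * (exp (u i a + vbar i a) * exp (fsum d (fun j => pt a j * ln (x j))) / Sq *
        exp (v a - vbar i a + (mu a - u i a))))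
      with (exp (- M / t) * exp (u i a + vbar i a) * exp (fsum d (fun j => pt a j * ln (x j))) *
        exp (v a - vbar i a + (mu a - u i a))) by (field; lra).
    rewrite <- !exp_plus. f_equal. field. lra.
Qed.
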